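(* Let $m\in\mathbb{N}$, let $u,v\in\ell^1(\mathbb{R}^m)$ and $q\in\partial\|\cdot\|_{\ell^1(\mathbb{R}^m)}(v)$. Then $$\mathrm{ICB}^q_{\ell^1(\mathbb{R}^m)}(u,v)=\sum_{i\in\mathbb{N}}G(u_i,q_i),$$ where $G:\mathbb{R}^m\times\mathbb{R}^m\to\mathbb{R}$ is given by $$G(u_i,q_i)=\begin{cases}|u_i|\big(1-|\cos(\varphi_i)|\,|q_i|\big), & |q_i|<|\cos(\varphi_i)|,\\ |u_i|\,|\sin(\varphi_i)|\sqrt{1-|q_i|^2}, & |q_i|\ge|\cos(\varphi_i)|,\end{cases}$$ and $\varphi_i$ denotes the angle between $u_i$ and $q_i$, i.e. $\cos(\varphi_i)|u_i||q_i|=u_i\cdot q_i$, with $\varphi_i:=0$ if $q_i=0$ or $u_i=0$.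
   Context: $\ell^1(\mathbb{R}^m)$ is the space of sequences $(x_i)_{i\in\mathbb{N}}$, $x_i\in\mathbb{R}^m$, with $\|x\|_{\ell^1(\mathbb{R}^m)}=\sum_i|x_i|<\infty$, $|\cdot|$ the Euclidean norm; subgradients lie in $\ell^\infty(\mathbb{R}^m)$ with pairing $\langle q,u\rangle=\sum_i q_i\cdot u_i$. Bregman distance: $D^q_{\ell^1(\mathbb{R}^m)}(u,v)=\|u\|_{\ell^1(\mathbb{R}^m)}-\|v\|_{\ell^1(\mathbb{R}^m)}-\langle q,u-v\rangle$. $\mathrm{ICB}^q_{\ell^1(\mathbb{R}^m)}(u,v)=\inf_{z\in\ell^1(\mathbb{R}^m)}\big(D^q_{\ell^1(\mathbb{R}^m)}(u-z,v)+D^{-q}_{\ell^1(\mathbb{R}^m)}(z,-v)\big)$. *)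

(* Defs.v *)
From HB Require Import structures.
From mathcomp Require Import all_boot all_order all_algebra.
From mathcomp Require Import all_classical all_reals all_analysis.
Set Implicit Arguments. Unset Strict Implicit. Unset Printing Implicit Defensive.
Import Order.TTheory GRing.Theory Num.Theory numFieldNormedType.Exports.
Local Open Scope ring_scope.
Local Open Scope classical_set_scope.

Section L1.
Variables (R : realType) (m : nat).

Definition vdot (x y : 'rV[R]_m) : R := \sum_(j < m) x 0 j * y 0 j.
Definition vnorm (x : 'rV[R]_m) : R := Num.sqrt (vdot x x).

Definition seqv := nat -> 'rV[R]_m.

Definition sum_oo (f : nat -> R) : R := limn (series f).

Definition is_l1 (u : seqv) : Prop := cvgn (series (fun i => vnorm (u i))).
Definition l1norm (u : seqv) : R := sum_oo (fun i => vnorm (u i)).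
Definition is_linf (q : seqv) : Prop := exists M : R, forall i, vnorm (q i) <= M.
Definition pairing (q u : seqv) : R := sum_oo (fun i => vdot (q i) (u i)).

Definition seq_sub (u w : seqv) : seqv := fun i => u i - w i.
Definition seq_opp (u : seqv) : seqv := fun i => - u i.

Definition subgrad_l1 (v q : seqv) : Prop :=
  is_linf q /\
  forall w : seqv, is_l1 w -> l1norm v + pairing q (seq_sub w v) <= l1norm w.

Definition bregman (q u v : seqv) : R :=
  l1norm u - l1norm v - pairing q (seq_sub u v).

Definition ICB (q u v : seqv) : R :=
  inf [set x : R | exists z : seqv, is_l1 z /\
        x = bregman q (seq_sub u z) v + bregman (seq_opp q) z (seq_opp v)].

Definition angle (a b : 'rV[R]_m) : R :=
  if (a == 0) || (b == 0) then 0
  else acos (vdot a b / (vnorm a * vnorm b)).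

Definition Gfun (a b : 'rV[R]_m) : R :=
  let phi := angle a b in
  if vnorm b < `|cos phi|
  then vnorm a * (1 - `|cos phi| * vnorm b)
  else vnorm a * `|sin phi| * Num.sqrt (1 - vnorm b ^+ 2).

End L1.

(* Main.v *)
Require Import Defs.
From HB Require Import structures.
From mathcomp Require Import all_boot all_order all_algebra.
From mathcomp Require Import all_classical all_reals all_analysis.
From mathcomp Require Import ring lra.
Import Order.TTheory GRing.Theory Num.Theory numFieldNormedType.Exports.
Local Open Scope ring_scope.
Set Implicit Arguments. Unset Strict Implicit. Unset Printing Implicit Defensive.

Section Vec.
Variables (R : realType) (m : nat).
Implicit Types x y z a b s : 'rV[R]_m.

Lemma vdotC x y : vdot x y = vdot y x.
Proof. by apply: eq_bigr => j _; rewrite mulrC. Qed.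
Lemma vdotDl x y z : vdot (x + y) z = vdot x z + vdot y z.
Proof. by rewrite /vdot -big_split; apply: eq_bigr => j _; rewrite !mxE mulrDl. Qed.
Lemma vdotDr x y z : vdot z (x + y) = vdot z x + vdot z y.
Proof. by rewrite vdotC vdotDl !(vdotC z). Qed.
Lemma vdotZl k x y : vdot (k *: x) y = k * vdot x y.
Proof. by rewrite /vdot mulr_sumr; apply: eq_bigr => j _; rewrite !mxE mulrA. Qed.
Lemma vdotZr k x y : vdot y (k *: x) = k * vdot y x.
Proof. by rewrite vdotC vdotZl vdotC. Qed.
Lemma vdotNl x y : vdot (- x) y = - vdot x y.
Proof. by rewrite -scaleN1r vdotZl mulN1r. Qed.
Lemma vdotNr x y : vdot y (- x) = - vdot y x.
Proof. by rewrite vdotC vdotNl vdotC. Qed.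
Lemma vdotBl x y z : vdot (x - y) z = vdot x z - vdot y z.
Proof. by rewrite vdotDl vdotNl. Qed.
Lemma vdotBr x y z : vdot z (x - y) = vdot z x - vdot z y.
Proof. by rewrite vdotDr vdotNr. Qed.
Lemma vdot0l x : vdot 0 x = 0.
Proof. by rewrite -(scale0r 0) vdotZl mul0r. Qed.
Lemma vdot0r x : vdot x 0 = 0.
Proof. by rewrite vdotC vdot0l. Qed.
Lemma vdotxx_ge0 x : 0 <= vdot x x.
Proof. by apply: sumr_ge0 => j _; rewrite -expr2 sqr_ge0. Qed.
Lemma vdotxx_eq0 x : vdot x x = 0 -> x = 0.
Proof.
move=> /eqP; rewrite psumr_eq0; last by move=> j _; rewrite -expr2 sqr_ge0.
move=> /allP H; apply/rowP => j; rewrite !mxE.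
have := H j (mem_index_enum j); rewrite /= mulf_eq0 orbb => /eqP.
by have -> : (0 : 'I_1) = ord0 by apply: val_inj.
Qed.
Lemma vnorm_ge0 x : 0 <= vnorm x.
Proof. exact: sqrtr_ge0. Qed.
Lemma vnorm_sq x : vnorm x ^+ 2 = vdot x x.
Proof. by rewrite sqr_sqrtr // vdotxx_ge0. Qed.
Lemma vnorm_gt0 x : x != 0 -> 0 < vnorm x.
Proof.
move=> x0; rewrite lt_def vnorm_ge0 andbT; apply/eqP => /(congr1 (fun t => t ^+ 2)).
by rewrite vnorm_sq expr0n /= => /vdotxx_eq0 /eqP; rewrite (negPf x0).
Qed.
Lemma vnorm0 : vnorm (0 : 'rV[R]_m) = 0.
Proof. by rewrite /vnorm vdot0l sqrtr0. Qed.
Lemma vnormZ k x : vnorm (k *: x) = `|k| * vnorm x.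
Proof.
by rewrite /vnorm vdotZl vdotZr mulrA -expr2 sqrtrM ?sqr_ge0 // sqrtr_sqr.
Qed.
Lemma vnormN x : vnorm (- x) = vnorm x.
Proof. by rewrite /vnorm vdotNl vdotNr opprK. Qed.
Lemma vnorm_eq x t : 0 <= t -> vdot x x = t ^+ 2 -> vnorm x = t.
Proof. by move=> t0 e; rewrite /vnorm e sqrtr_sqr ger0_norm. Qed.

Lemma CS2 x y : vdot x y ^+ 2 <= vdot x x * vdot y y.
Proof.
have [y0|y0] := eqVneq y 0.
  by rewrite y0 vdot0r vdot0r expr0n /= mulr0.
have hy : 0 < vdot y y by rewrite -vnorm_sq exprn_gt0 // vnorm_gt0.
have := vdotxx_ge0 (vdot y y *: x - vdot x y *: y).
rewrite !(vdotBl, vdotBr, vdotZl, vdotZr) (vdotC y x) => H.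
have : 0 <= vdot y y * (vdot x x * vdot y y - vdot x y ^+ 2).
  by apply: (le_trans H); rewrite le_eqVlt; apply/orP; left; apply/eqP; ring.
by rewrite pmulr_rge0 // subr_ge0.
Qed.
Lemma CS x y : `|vdot x y| <= vnorm x * vnorm y.
Proof.
rewrite -sqrtr_sqr /vnorm -sqrtrM ?vdotxx_ge0 //.
exact/ler_wsqrtr/CS2.
Qed.
Lemma CS1 x y : vdot x y <= vnorm x * vnorm y.
Proof. exact: le_trans (ler_norm _) (CS x y). Qed.
Lemma vnormD x y : vnorm (x + y) <= vnorm x + vnorm y.
Proof.
rewrite {1}/vnorm -(ger0_norm (addr_ge0 (vnorm_ge0 x) (vnorm_ge0 y))) -sqrtr_sqr.
apply: ler_wsqrtr; rewrite !(vdotDl, vdotDr) (vdotC y x) sqrrD -!vnorm_sq.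
have := CS1 x y; lra.
Qed.

Definition Fc a b z := vnorm (a - z) - vdot b (a - z) + vnorm z + vdot b z.

Lemma cert_lb a b s z : vnorm (s + b) <= 1 -> vnorm (s - b) <= 1 ->
  vdot s a <= Fc a b z.
Proof.
move=> h1 h2; rewrite /Fc.
have e1 := CS1 (s + b) (a - z). have e2 := CS1 (s - b) z.
have n1 := vnorm_ge0 (a - z). have n2 := vnorm_ge0 z.
have f1 : vnorm (s + b) * vnorm (a - z) <= vnorm (a - z) by rewrite ler_piMl.
have f2 : vnorm (s - b) * vnorm z <= vnorm z by rewrite ler_piMl.
move: e1 e2; rewrite !(vdotBl, vdotBr, vdotDl, vdotDr, vdotNl, vdotNr); lra.
Qed.
End Vec.

Section Comp.
Variables (R : realType) (m : nat).
Implicit Types x y z a b s : 'rV[R]_m.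

Lemma vnorm_le x t : 0 <= t -> vdot x x <= t ^+ 2 -> vnorm x <= t.
Proof. by move=> t0 h; rewrite -(ger0_norm t0) -sqrtr_sqr; apply: ler_wsqrtr. Qed.

Lemma sq_le (x y : R) : 0 <= y -> x ^+ 2 <= y ^+ 2 -> x <= y.
Proof.
move=> y0 h; rewrite -(ger0_norm y0) -sqrtr_sqr; apply: le_trans (ler_norm x) _.
by rewrite -sqrtr_sqr; apply: ler_wsqrtr.
Qed.

Lemma Gfun_nz a b : a != 0 -> b != 0 ->
  let c0 := vdot a b / (vnorm a * vnorm b) in
  Gfun a b = if vnorm b < `|c0| then vnorm a * (1 - `|c0| * vnorm b)
             else vnorm a * Num.sqrt (1 - c0 ^+ 2) * Num.sqrt (1 - vnorm b ^+ 2).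
Proof.
move=> a0 b0 c0.
have hab : 0 < vnorm a * vnorm b by rewrite mulr_gt0 // vnorm_gt0.
have hc : `|c0| <= 1.
  by rewrite /c0 normrM normfV (ger0_norm (ltW hab)) ler_pdivrMr // mul1r CS.
have hc' : -1 <= c0 <= 1 by rewrite -ler_norml.
rewrite /Gfun /angle (negPf a0) (negPf b0) /= -/c0 acosK; last by rewrite in_itv.
by rewrite sin_acos // (ger0_norm (sqrtr_ge0 _)).
Qed.

Lemma comp_main a b : vnorm b <= 1 ->
  [/\ 0 <= Gfun a b, (forall z, Gfun a b <= Fc a b z) &
      (forall e, 0 < e -> exists z, Fc a b z <= Gfun a b + e)].
Proof.
move=> hb1.
have [->|a0] := eqVneq a 0.
  have -> : Gfun 0 b = 0.
    by rewrite /Gfun /angle eqxx /= cos0 sin0 normr1 normr0 vnorm0 !mul0r; case: ifP.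
  split => //.
    move=> z; have := cert_lb 0 z (s := 0) (b := b).
    by rewrite vdot0l add0r sub0r vnormN; apply.
  move=> e e0; exists 0; rewrite /Fc subrr vnorm0 vdot0r; lra.
have hna : 0 < vnorm a by rewrite vnorm_gt0.
have [->|b0] := eqVneq b 0.
  have -> : Gfun a 0 = vnorm a.
    by rewrite /Gfun /angle eqxx orbT /= cos0 normr1 vnorm0 ltr01 mulr0 subr0 mulr1.
  split; first exact: ltW.
    move=> z; have := cert_lb a z (s := (vnorm a)^-1 *: a) (b := 0).
    rewrite vdotZl addr0 subr0 vnormZ ger0_norm ?invr_ge0 ?vnorm_ge0 //.
    rewrite mulVf ?gt_eqF // lexx -vnorm_sq => /(_ isT isT).
    by rewrite expr2 mulrA mulVf ?gt_eqF // mul1r.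
  move=> e e0; exists 0; rewrite /Fc subr0 vnorm0 !vdot0l; lra.
have hnb : 0 < vnorm b by rewrite vnorm_gt0.
set na := vnorm a; set nb := vnorm b; set d := vdot a b.
have haa : vdot a a = na ^+ 2 by rewrite vnorm_sq.
have hbb : vdot b b = nb ^+ 2 by rewrite vnorm_sq.
have hba : vdot b a = d by rewrite vdotC.
have hCS : `|d| <= na * nb by apply: CS.
have hd : `|d| <= na.
  by apply: (le_trans hCS); rewrite ger_pMr.
rewrite Gfun_nz //=.
set c0 := d / (na * nb).
have habs : `|c0| = `|d| / (na * nb).
  by rewrite /c0 normrM normfV (ger0_norm (ltW (mulr_gt0 hna hnb))).
case: ifP => hc.
-
  have key : nb ^+ 2 * na < `|d|.
    have e : nb ^+ 2 * na = nb * (na * nb) by rewrite expr2; ring.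
    by rewrite e -ltr_pdivlMr ?mulr_gt0 // -habs.
  have -> : na * (1 - `|c0| * nb) = na - `|d|.
    by rewrite habs; field; rewrite !gt_eqF.
  set k := na^-1.
  have hk : k * na = 1 by rewrite mulVf // gt_eqF.
  have hk0 : 0 < k by rewrite invr_gt0.
  have hkey : nb ^+ 2 < k * `|d|.
    have : k * (nb ^+ 2 * na) < k * `|d| by rewrite ltr_pM2l.
    by rewrite mulrCA hk mulr1.
  have hnka : vnorm (k *: a) = 1 by rewrite vnormZ ger0_norm ?ltW // hk.
  have [d0|d0] := lerP 0 d.
  + rewrite ger0_norm // in hkey hd *.
    have hs : vnorm ((k *: a - b) - b) <= 1.
      apply: vnorm_le => //; rewrite expr1n.
      rewrite !(vdotBl, vdotBr, vdotZl, vdotZr) haa hbb hba -/d.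
      have -> : k * (k * na ^+ 2) = 1 by rewrite -(expr1n _ 2) -hk; ring.
      nra.
    have hval : vdot (k *: a - b) a = na - d.
      by rewrite vdotBl vdotZl haa hba expr2 mulrA hk mul1r.
    split; first nra.
      move=> z; have := cert_lb a z (s := k *: a - b) (b := b).
      by rewrite subrK hnka hval; apply.
    move=> e e0; exists 0; rewrite /Fc subr0 vnorm0 vdot0r -/na hba; lra.
  + rewrite ltr0_norm // in hkey hd *.
    have hs : vnorm ((k *: a + b) + b) <= 1.
      apply: vnorm_le => //; rewrite expr1n.
      rewrite !(vdotDl, vdotDr, vdotZl, vdotZr) haa hbb hba -/d.
      have -> : k * (k * na ^+ 2) = 1 by rewrite -(expr1n _ 2) -hk; ring.
      nra.
    have hval : vdot (k *: a + b) a = na - - d.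
      by rewrite vdotDl vdotZl haa hba expr2 mulrA hk mul1r opprK.
    split; first nra.
      move=> z; have := cert_lb a z (s := k *: a + b) (b := b).
      by rewrite addrK hnka hval; apply.
    move=> e e0; exists a; rewrite /Fc subrr vnorm0 vdot0r -/na hba; lra.
-
  have key2 : `|d| <= nb ^+ 2 * na.
    move/negbT: hc; rewrite -leNgt habs ler_pdivrMr ?mulr_gt0 //.
    by have -> : nb ^+ 2 * na = nb * (na * nb) by rewrite expr2; ring.
  have hnb0 : nb != 0 by rewrite gt_eqF.
  have hna0 : na != 0 by rewrite gt_eqF.
  set r := d / nb ^+ 2.
  set ap := a - r *: b.
  set P := vnorm ap.
  set sg := Num.sqrt (1 - nb ^+ 2).
  have hrd : r * nb ^+ 2 = d by rewrite /r; field.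
  have hapb : vdot ap b = 0.
    by rewrite /ap vdotBl vdotZl hbb hrd subrr.
  have hbap : vdot b ap = 0 by rewrite vdotC.
  have hapa : vdot ap a = na ^+ 2 - r * d.
    by rewrite /ap vdotBl vdotZl haa hba.
  have hap : vdot ap ap = na ^+ 2 - r * d.
    by rewrite {2}/ap vdotBr vdotZr hapb mulr0 subr0 hapa.
  have hP2 : P ^+ 2 = na ^+ 2 - r * d by rewrite vnorm_sq hap.
  have hP0 : 0 <= P by apply: vnorm_ge0.
  have hG : na * Num.sqrt (1 - c0 ^+ 2) = P.
    have hna' : 0 <= na := ltW hna.
    rewrite -{1}(ger0_norm hna') -sqrtr_sqr -sqrtrM ?sqr_ge0 // /P /vnorm hap.
    by congr Num.sqrt; rewrite /c0 /r; field; rewrite hna0 hnb0.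
  rewrite hG.
  have h1nb : 0 <= 1 - nb ^+ 2.
    by rewrite subr_ge0 exprn_ile1 // ltW.
  have hsg0 : 0 <= sg by apply: sqrtr_ge0.
  have hsg2 : sg ^+ 2 = 1 - nb ^+ 2 by rewrite sqr_sqrtr.
  set k := sg / P.
  set s := k *: ap.
  have hsb : vdot s b = 0 by rewrite vdotZl hapb mulr0.
  have hbs : vdot b s = 0 by rewrite vdotC.
  have hss : vdot s s = k ^+ 2 * P ^+ 2 by rewrite vdotZl vdotZr hap -hP2; ring.
  have hkP : k ^+ 2 * P ^+ 2 <= sg ^+ 2.
    have [->|P0] := eqVneq P 0; first by rewrite expr0n /= mulr0 sqr_ge0.
    by rewrite /k le_eqVlt; apply/orP; left; apply/eqP; field.
  have hsa : vdot s a = P * sg.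
    rewrite vdotZl hapa -hP2 /k.
    have [->|P0] := eqVneq P 0; first by rewrite invr0 !(mulr0, mul0r).
    by field.
  split; first exact: mulr_ge0.
    move=> z; rewrite -hsa; apply: cert_lb.
      apply: vnorm_le => //; rewrite expr1n !(vdotDl, vdotDr) hsb hbs hbb hss; lra.
    apply: vnorm_le => //; rewrite expr1n !(vdotBl, vdotBr) hsb hbs hbb hss; lra.
  move=> e e0.
  have [nb1|nb1] := eqVneq nb 1.
    have -> : sg = 0 by rewrite /sg nb1 expr1n subrr sqrtr0.
    set l := na ^+ 2 / (2 * e) + na.
    have hl0 : 0 <= l.
      rewrite /l; apply: addr_ge0 (ltW hna); apply: divr_ge0; first exact: sqr_ge0.
      by rewrite mulr_ge0 // ltW.
    have hlna : na <= l by rewrite /l lerDr divr_ge0 ?sqr_ge0 // mulr_ge0 // ltW.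
    have hle : na ^+ 2 <= 2 * e * (l + d).
      have : na ^+ 2 = 2 * e * (na ^+ 2 / (2 * e)) by field; rewrite gt_eqF.
      have := ler_norm (- d); rewrite normrN /l. 
      have : 0 < 2 * e by rewrite mulr_gt0.
      nra.
    exists ((- l) *: b).
    have hn : vnorm (a - (- l) *: b) <= l + d + e.
      apply: vnorm_le; first by have := ler_norm (- d); rewrite normrN; lra.
      rewrite !(vdotBl, vdotBr, vdotZl, vdotZr) haa hbb hba (vdotC a b) -/d nb1.
      have := sqr_ge0 d; have := sqr_ge0 e; nra.
    rewrite /Fc vnormZ -/nb nb1 normrN (ger0_norm hl0) !(vdotBr, vdotZr) hbb hba nb1.
    lra.
  have hnb1 : nb < 1 by rewrite lt_neqAle nb1.
  have hsgp : 0 < sg by rewrite sqrtr_gt0 subr_gt0 exprn_ilt1 // ltW.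
  have hdd : `|d| ^+ 2 = d ^+ 2 by rewrite real_normK ?num_real.
  have hd2 : d ^+ 2 <= (nb ^+ 2 * na) ^+ 2.
    rewrite -hdd; have := normr_ge0 d; nra.
  have hPp : 0 < P.
    rewrite lt_def hP0 andbT; apply/eqP => P0.
    have e1 : na ^+ 2 * nb ^+ 2 = d ^+ 2.
      have : P ^+ 2 * nb ^+ 2 = 0 by rewrite P0 expr0n /= mul0r.
      rewrite hP2 /r => h; apply/eqP; rewrite -subr_eq0; apply/eqP; rewrite -h; field; exact: hnb0.
    have : 0 < na ^+ 2 * nb ^+ 2 * (1 - nb ^+ 2).
      by rewrite !mulr_gt0 ?exprn_gt0 // subr_gt0 exprn_ilt1 // ltW.
    move: hd2; rewrite -e1; nra.
  have hr : `|r| <= P / sg.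
    have ea : `|r| = (`|d| * sg) / (nb ^+ 2 * sg).
      rewrite /r normrM normfV (ger0_norm (sqr_ge0 nb)); field.
      by rewrite gt_eqF // hnb0.
    have eb : P / sg = (P * nb ^+ 2) / (nb ^+ 2 * sg) by field; rewrite gt_eqF ?hnb0.
    rewrite ea eb; apply: ler_wpM2r; first by rewrite invr_ge0 mulr_ge0 ?sqr_ge0.
    apply: sq_le; first by rewrite mulr_ge0 ?sqr_ge0.
    rewrite !exprMn hdd hsg2 hP2 /r.
    have -> : (na ^+ 2 - d / nb ^+ 2 * d) * (nb ^+ 2 * nb ^+ 2) =
      na ^+ 2 * (nb ^+ 2 * nb ^+ 2) - d ^+ 2 * nb ^+ 2 by field.
    move: hd2; rewrite exprMn.
    have -> : (nb ^+ 2) ^+ 2 = nb ^+ 2 * nb ^+ 2 by rewrite expr2.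
    move=> hd2.
    have -> : d ^+ 2 * (1 - nb ^+ 2) = d ^+ 2 - d ^+ 2 * nb ^+ 2 by ring.
    rewrite lerD2r; move: hd2; rewrite mulrC; done.
  move: hr; rewrite ler_norml => /andP[hr1 hr2].
  set l := (P / sg - r) / 2.
  set mu := r + l.
  have hl0 : 0 <= l by rewrite /l divr_ge0 // subr_ge0.
  have hmu0 : 0 <= mu by rewrite /mu /l; lra.
  exists (l *: (s - b)).
  have hvec : a - l *: (s - b) = mu *: (s + b).
    apply/rowP => j; rewrite !mxE.
    have hk : (r + 2 * l) * k = 1 by rewrite /l /k; field; rewrite !gt_eqF.
    rewrite /mu; apply/eqP; rewrite -subr_eq0; apply/eqP.
    have -> : a 0 j - l * (k * (a 0 j - r * b 0 j) - b 0 j) -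
      (r + l) * (k * (a 0 j - r * b 0 j) + b 0 j) =
      (1 - (r + 2 * l) * k) * (a 0 j - r * b 0 j) by ring.
    by rewrite hk subrr mul0r.
  have hsp : vnorm (s + b) = 1.
    apply: vnorm_eq => //; rewrite expr1n !(vdotDl, vdotDr) hsb hbs hbb hss /k.
    have -> : (sg / P) ^+ 2 * P ^+ 2 = sg ^+ 2 by field; rewrite gt_eqF.
    lra.
  have hsm : vnorm (s - b) = 1.
    apply: vnorm_eq => //; rewrite expr1n !(vdotBl, vdotBr) hsb hbs hbb hss /k.
    have -> : (sg / P) ^+ 2 * P ^+ 2 = sg ^+ 2 by field; rewrite gt_eqF.
    lra.
  rewrite /Fc hvec !vnormZ hsp hsm (ger0_norm hl0) (ger0_norm hmu0).
  rewrite !vdotZr !(vdotDr, vdotBr, vdotNr) hbs hbb.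
  have -> : mu * 1 - mu * (0 + nb ^+ 2) + l * 1 + l * (0 + - nb ^+ 2) =
    (r + 2 * l) * sg ^+ 2 by rewrite hsg2 /mu; ring.
  have -> : (r + 2 * l) * sg ^+ 2 = P * sg by rewrite /l; field; rewrite gt_eqF.
  lra.
Qed.
End Comp.

Section Ser.
Variable R : realType.
Local Open Scope classical_set_scope.
Implicit Types f g : nat -> R.

Lemma sum_oo_ext f g : (forall i, f i = g i) -> sum_oo f = sum_oo g.
Proof. by move=> h; congr sum_oo; apply: funext. Qed.

Lemma cvg_ext f g : (forall i, f i = g i) -> cvgn (series f) -> cvgn (series g).
Proof. by move=> h; have -> : f = g by apply: funext. Qed.

Lemma cvg_abs f g : (forall i, `|f i| <= g i) -> cvgn (series g) -> cvgn (series f).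
Proof.
move=> h cg; apply: normed_cvg.
have : cvgn (series (fun i => `|f i|)).
  apply: series_le_cvg cg => // i; apply: le_trans (h i).
  exact: normr_ge0.
by [].
Qed.

Lemma cvgD f g : cvgn (series f) -> cvgn (series g) ->
  cvgn (series (fun i => f i + g i)).
Proof. exact: is_cvg_seriesD. Qed.
Lemma cvgB f g : cvgn (series f) -> cvgn (series g) ->
  cvgn (series (fun i => f i - g i)).
Proof. exact: is_cvg_seriesB. Qed.
Lemma cvgZ f k : cvgn (series f) -> cvgn (series (fun i => k * f i)).
Proof. exact: is_cvg_seriesZ. Qed.

Lemma sum_oo_D f g : cvgn (series f) -> cvgn (series g) ->
  sum_oo (fun i => f i + g i) = sum_oo f + sum_oo g.
Proof. exact: lim_seriesD. Qed.
Lemma sum_oo_B f g : cvgn (series f) -> cvgn (series g) ->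
  sum_oo (fun i => f i - g i) = sum_oo f - sum_oo g.
Proof. exact: lim_seriesB. Qed.
Lemma sum_oo_N f : cvgn (series f) -> sum_oo (fun i => - f i) = - sum_oo f.
Proof. exact: lim_seriesN. Qed.
Lemma sum_oo_Z f k : cvgn (series f) -> sum_oo (fun i => k * f i) = k * sum_oo f.
Proof. exact: lim_seriesZ. Qed.
Lemma sum_oo_le f g : cvgn (series f) -> cvgn (series g) ->
  (forall i, f i <= g i) -> sum_oo f <= sum_oo g.
Proof. exact: lim_series_le. Qed.

Lemma fin_supp f N : (forall i, (N <= i)%N -> f i = 0) ->
  cvgn (series f) /\ sum_oo f = \sum_(i < N) f i.
Proof.
move=> h.
have hs : forall n, (N <= n)%N -> series f n = series f N.
  elim=> [|n IH]; first by rewrite leqn0 => /eqP ->.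
  rewrite leq_eqVlt => /orP[/eqP <- //|hn].
  by rewrite seriesSr IH // h // addr0.
have hc : series f @ \oo --> series f N.
  by apply: cvg_near_cst; exists N => // n /= /hs.
split; first exact: (cvgP _ hc).
rewrite /sum_oo (cvg_lim _ hc) //.
by rewrite /series /= big_mkord.
Qed.

Lemma sum_oo_single i (c : R) : sum_oo (fun j => if j == i then c else 0) = c.
Proof.
have h : forall j, (i.+1 <= j)%N -> (if j == i then c else 0) = 0.
  by move=> j hj; rewrite gtn_eqF.
have [_ ->] := fin_supp h.
rewrite big_ord_recr /= eqxx big1 ?add0r // => j _.
by rewrite ltn_eqF.
Qed.
End Ser.

Unset Implicit Arguments.
Theorem theorem6 (R : realType) (m : nat) (u v q : seqv R m) :
  is_l1 u -> is_l1 v -> subgrad_l1 v q ->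
  ICB q u v = sum_oo (fun i => Gfun (u i) (q i)).
Proof.
move=> hu hv [hq hsub].
have hq1 : forall i, vnorm (q i) <= 1.
  move=> i.
  pose w : seqv R m := fun j => if j == i then v j + q i else v j.
  pose dl := fun j : nat => if j == i then vnorm (v i + q i) - vnorm (v i) else 0.
  have hdl : forall j, (i.+1 <= j)%N -> dl j = 0 by move=> j hj; rewrite /dl gtn_eqF.
  have [cdl _] := fin_supp hdl.
  have ew : forall j, vnorm (w j) = vnorm (v j) + dl j.
    move=> j; rewrite /w /dl; case: eqP => [->|_]; last by rewrite addr0.
    lra.
  have hw : is_l1 w.
    by rewrite /is_l1; apply: cvg_ext (cvgD hv cdl) => j; rewrite ew.
  have := hsub w hw.
  have -> : l1norm w = l1norm v + (vnorm (v i + q i) - vnorm (v i)).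
    by rewrite /l1norm (sum_oo_ext ew) sum_oo_D // /dl sum_oo_single.
  have -> : pairing q (Defs.seq_sub w v) = vnorm (q i) ^+ 2.
    rewrite /pairing (sum_oo_ext (g := fun j => if j == i then vdot (q i) (q i) else 0)).
      by rewrite sum_oo_single vnorm_sq.
    move=> j; rewrite /Defs.seq_sub /w; case: eqP => [->|_]; first by rewrite addrAC subrr add0r.
    by rewrite subrr vdot0r.
  have := vnormD (v i) (q i); have := vnorm_ge0 (q i); nra.
have cQ : cvgn (series (fun i => vdot (q i) (v i))).
  apply: cvg_abs hv => i; apply: le_trans (CS _ _) _.
  by rewrite ler_piMl ?vnorm_ge0 ?hq1.
have hqv : pairing q v = l1norm v.
  have h0f : forall j, (0 <= j)%N -> (fun _ : nat => vnorm (0 : 'rV[R]_m)) j = 0.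
    by move=> j _; rewrite vnorm0.
  have [c0 s0] := fin_supp h0f.
  have := hsub (fun _ => 0) c0.
  have -> : l1norm (fun _ : nat => (0 : 'rV[R]_m)) = 0 by rewrite /l1norm s0 big_ord0.
  have -> : pairing q (Defs.seq_sub (fun _ => 0) v) = - pairing q v.
    rewrite /pairing -(sum_oo_N cQ); apply: sum_oo_ext => j.
    by rewrite /Defs.seq_sub sub0r vdotNr.
  have : pairing q v <= l1norm v.
    apply: sum_oo_le cQ hv _ => i; apply: le_trans (CS1 _ _) _.
    by rewrite ler_piMl ?vnorm_ge0 ?hq1.
  lra.
have hPhi : forall z : seqv R m, is_l1 z ->
  cvgn (series (fun i => Fc (u i) (q i) (z i))) /\
  bregman q (Defs.seq_sub u z) v + bregman (seq_opp q) z (seq_opp v) =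
  sum_oo (fun i => Fc (u i) (q i) (z i)).
  move=> z hz.
  have cX1 : cvgn (series (fun i => vnorm (u i - z i))).
    apply: cvg_abs (cvgD hu hz) => i; rewrite ger0_norm ?vnorm_ge0 //.
    by apply: le_trans (vnormD _ _) _; rewrite vnormN.
  have cY1 : cvgn (series (fun i => vdot (q i) (u i - z i))).
    apply: cvg_abs cX1 => i; apply: le_trans (CS _ _) _.
    by rewrite ler_piMl ?vnorm_ge0 ?hq1.
  have cY2 : cvgn (series (fun i => vdot (q i) (z i))).
    apply: cvg_abs hz => i; apply: le_trans (CS _ _) _.
    by rewrite ler_piMl ?vnorm_ge0 ?hq1.
  have cY2N : cvgn (series (fun i => - vdot (q i) (z i))).
    by apply: cvg_abs hz => i; rewrite normrN; apply: le_trans (CS _ _) _;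
       rewrite ler_piMl ?vnorm_ge0 ?hq1.
  have cF := cvgD (cvgD (cvgB cX1 cY1) hz) cY2.
  split; first exact: cF.
  have eF : sum_oo (fun i => Fc (u i) (q i) (z i)) =
    sum_oo (fun i => vnorm (u i - z i)) - sum_oo (fun i => vdot (q i) (u i - z i))
    + sum_oo (fun i => vnorm (z i)) + sum_oo (fun i => vdot (q i) (z i)).
    rewrite -(sum_oo_B cX1 cY1) -(sum_oo_D (cvgB cX1 cY1) hz).
    by rewrite -(sum_oo_D (cvgD (cvgB cX1 cY1) hz) cY2).
  have e1 : l1norm (Defs.seq_sub u z) = sum_oo (fun i => vnorm (u i - z i)) by [].
  have e2 : pairing q (Defs.seq_sub (Defs.seq_sub u z) v) =
      sum_oo (fun i => vdot (q i) (u i - z i)) - pairing q v.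
    rewrite /pairing -(sum_oo_B cY1 cQ); apply: sum_oo_ext => i.
    by rewrite /Defs.seq_sub vdotBr.
  have e3 : l1norm (seq_opp v) = l1norm v.
    by apply: sum_oo_ext => i; rewrite /seq_opp vnormN.
  have e4 : pairing (seq_opp q) (Defs.seq_sub z (seq_opp v)) =
      - sum_oo (fun i => vdot (q i) (z i)) - pairing q v.
    rewrite /pairing -(sum_oo_N cY2) -(sum_oo_B cY2N cQ); apply: sum_oo_ext => i.
    rewrite /seq_opp /Defs.seq_sub vdotNl vdotBr vdotNr; lra.
  rewrite /bregman e1 e2 e3 e4 hqv eF /l1norm; lra.
set g := fun i => Gfun (u i) (q i).
have hg : forall i, [/\ 0 <= g i, forall z, g i <= Fc (u i) (q i) z &
    forall e, 0 < e -> exists z, Fc (u i) (q i) z <= g i + e].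
  by move=> i; apply: comp_main.
have hF0 : forall i, Fc (u i) (q i) 0 <= 2 * vnorm (u i).
  move=> i; rewrite /Fc !subr0 vnorm0 vdot0r.
  have := CS (q i) (u i); have := ler_norm (- vdot (q i) (u i)); rewrite normrN.
  have : vnorm (q i) * vnorm (u i) <= vnorm (u i) by rewrite ler_piMl ?vnorm_ge0 ?hq1.
  lra.
have cg : cvgn (series g).
  apply: (@series_le_cvg _ g (fun i => 2 * vnorm (u i))); last exact: (cvgZ (k:=2) hu).

  - by move=> i; have [] := hg i.
  - by move=> i; rewrite mulr_ge0 ?vnorm_ge0.
  - by move=> i; have [_ h _] := hg i; apply: le_trans (h 0) (hF0 i).
rewrite /ICB; set S := (X in inf X).
have hlb : forall x, S x -> sum_oo g <= x.
  move=> x [z [hz ->]]; have [cF ->] := hPhi z hz.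
  by apply: sum_oo_le cg cF _ => i; have [_ h _] := hg i; exact: h.
have hhas : has_lbound S by exists (sum_oo g) => x /hlb.
have hz0 : is_l1 (fun _ : nat => (0 : 'rV[R]_m)).
  have h0f : forall j, (0 <= j)%N -> (fun _ : nat => vnorm (0 : 'rV[R]_m)) j = 0.
    by move=> j _; rewrite vnorm0.
  by have [] := fin_supp h0f.
have hne : exists x, S x by exists (bregman q (Defs.seq_sub u (fun _ => 0)) v +
    bregman (seq_opp q) (fun _ => 0) (seq_opp v)), (fun _ => 0).
apply/le_anti/andP; split; last by apply: lb_le_inf => // x /hlb.
apply/ler_addgt0Pr => e e0.
set ep := e / 3.
have ep0 : 0 < ep by rewrite divr_gt0.
have [N _ hN] := (cvgrPdist_lt _ _).1 hu ep ep0.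
have hNt : sum_oo (fun i => vnorm (u i)) - \sum_(i < N) vnorm (u i) <= ep.
  have := hN N (leqnn N) => /ltW; rewrite /series /= big_mkord.
  by move=> h; apply: le_trans (ler_norm _) h.
set eN := ep / N.+1%:R.
have eN0 : 0 < eN by rewrite divr_gt0.
have : forall i, exists y, Fc (u i) (q i) y <= g i + eN.
  by move=> i; have [_ _ h] := hg i; exact: h.
move=> /choice [y hy].
pose z : seqv R m := fun i => if (i < N)%N then y i else 0.
have hz : is_l1 z.
  have h : forall i, (N <= i)%N -> vnorm (z i) = 0.
    by move=> i hi; rewrite /z ltnNge hi /= vnorm0.
  by have [] := fin_supp h.
pose c := fun i : nat => if (i < N)%N then eN else 0.
have [cc sc] : cvgn (series c) /\ sum_oo c = \sum_(i < N) c i.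
  by apply: fin_supp => i hi; rewrite /c ltnNge hi.
pose d := fun i : nat => if (i < N)%N then 2 * vnorm (u i) else 0.
have [cd sd] : cvgn (series d) /\ sum_oo d = \sum_(i < N) d i.
  by apply: fin_supp => i hi; rewrite /d ltnNge hi.
have c2u := cvgZ (k:=2) hu.
have ct := cvgB c2u cd.
have [cF eF] := hPhi z hz.
have hbound : sum_oo (fun i => Fc (u i) (q i) (z i)) <=
    sum_oo (fun i => g i + c i + (2 * vnorm (u i) - d i)).
  apply: sum_oo_le cF (cvgD (cvgD cg cc) ct) _ => i.
  rewrite /z /c /d; case: ifP => hi.
    by rewrite subrr addr0; exact: hy.
  have [h0 _ _] := hg i; have := hF0 i; rewrite subr0 addr0; lra.
rewrite (sum_oo_D (cvgD cg cc) ct) (sum_oo_D cg cc) (sum_oo_B c2u cd) sum_oo_Z // in hbound.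
have hsc : sum_oo c <= ep.
  rewrite sc /c (eq_bigr (fun _ => eN)) => [|i _]; last by rewrite ltn_ord.
  rewrite sumr_const card_ord -mulr_natr /eN mulrAC.
  rewrite ler_pdivrMr ?ltr0Sn // ler_pM2l //.
  by rewrite ler_nat.
have hsd : sum_oo d = 2 * \sum_(i < N) vnorm (u i).
  rewrite sd /d mulr_sumr; apply: eq_bigr => i _; by rewrite ltn_ord.
have hx : S (bregman q (Defs.seq_sub u z) v + bregman (seq_opp q) z (seq_opp v)).
  by exists z.
apply: le_trans (ge_inf hhas hx) _.
rewrite eF; move: hbound; rewrite hsd.
have : ep * 3 = e by rewrite /ep; field.
rewrite -/(l1norm u) in hNt *.
lra.
Qed.
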